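(* Under the full correlation model $\mathtt{FC}$, given $n$, $m$ and a scoring vector $s$, a vector $k=(k_1,\ldots,k_n)$ of non-negative integers with $\sum_i k_i=m$ maximizing the egalitarian social welfare $SW^e_{\mathtt{FC}}(k)$, and one maximizing the Nash social welfare $SW^n_{\mathtt{FC}}(k)$, can each be computed in $O(nm^2)$ time.
   Context: There are $n$ agents $a_1,\ldots,a_n$ and $m$ items. A preference profile assigns to each agent a strict ranking of the items. A scoring vector is $s=(s_1,\ldots,s_m)$ of non-negative rationals with $s_1\ge\cdots\ge s_m$; an agent's value for her $j$-th preferred item is $s_j$, and utilities are additive. Given $k=(k_1,\ldots,k_n)$ with non-negative integer entries summing to $m$, agent $a_1$ first picks $k_1$ items, then $a_2$ picks $k_2$ of the remaining items, etc., each agent greedily picking her most preferred remaining items. $EU^k_\Psi(a)$ is the expected total score received by $a$ when the profile is drawn from $\Psi$. Social welfare: utilitarian $SW^u_\Psi(k)=\sum_a EU^k_\Psi(a)$, egalitarian $SW^e_\Psi(k)=\min_a EU^k_\Psi(a)$, Nash $SW^n_\Psi(k)=\prod_a EU^k_\Psi(a)$. Model $\mathtt{FC}$ (full correlation): all agents have the same ranking. *)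

(* Defs.v *)
From HB Require Import structures.
From mathcomp Require Import all_boot all_order all_fingroup all_algebra.
Set Implicit Arguments. Unset Strict Implicit. Unset Printing Implicit Defensive.
Import Order.TTheory GRing.Theory Num.Theory.
Local Open Scope ring_scope.

(* Items are 'I_m. A ranking is a permutation r : {perm 'I_m} mapping  *)
(* a (0-based) position j to the item ranked j-th. Scores: s : seq rat  *)
(* with s`_j = score of the (j+1)-th preferred item.                    *)
(* A profile assigns a ranking to each agent 'I_n; agents pick in the   *)
(* order a_1, ..., a_n (i.e. 0, ..., n-1).                              *)

Section Picking.
Variables (n m : nat) (prof : 'I_n -> {perm 'I_m}) (k : 'I_n -> nat).

Definition greedy_pick (j : 'I_n) (T : seq 'I_m) : seq 'I_m :=
  take (k j) [seq x <- map (prof j) (enum 'I_m) | x \notin T].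

Fixpoint taken (i : nat) : seq 'I_m :=
  if i is i'.+1 then
    let T := taken i' in
    T ++ (if insub i' is Some j then greedy_pick j T else [::])
  else [::].

Definition bundle (j : 'I_n) : seq 'I_m := greedy_pick j (taken j).

End Picking.

Definition utility (n m : nat) (s : seq rat) (prof : 'I_n -> {perm 'I_m})
    (k : 'I_n -> nat) (j : 'I_n) : rat :=
  \sum_(x <- bundle prof k j) s`_(((prof j)^-1)%g x).

(* Expected utility under FC: all agents share one common ranking,
   drawn uniformly at random among all rankings of the items. *)
Definition EU_FC (n m : nat) (s : seq rat) (k : 'I_n -> nat) (j : 'I_n) : rat :=
  (\sum_(p : {perm 'I_m}) utility s (fun _ => p) k j) / (#|{perm 'I_m}|%:R).

Definition seqmin (l : seq rat) : rat :=
  if l is x :: xs then foldr Num.min x xs else 0.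

Definition SWe_FC (n m : nat) (s : seq rat) (k : 'I_n -> nat) : rat :=
  seqmin [seq EU_FC m s k j | j <- enum 'I_n].

Definition SWn_FC (n m : nat) (s : seq rat) (k : 'I_n -> nat) : rat :=
  \prod_(j < n) EU_FC m s k j.

Definition scoring_vector (m : nat) (s : seq rat) : Prop :=
  size s = m /\ sorted (fun x y => y <= x) s /\ all (fun x => 0 <= x) s.

(* Part 2: machine model for running time: a unit-cost RAM over the    *)
(* rationals (memory cells indexed by nat holding rationals; +, -, *,  *)
(* comparisons, indirect addressing), given as a deep embedding of a   *)
(* small while-language with a cost-annotated big-step semantics.      *)

Definition mem := nat -> rat.

Inductive expr :=
  | ECst of rat
  | ELoad of expr
  | EAdd of expr & expr
  | ESub of expr & expr
  | EMul of expr & expr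
  | ELt of expr & expr
  | ELe of expr & expr
  | EEq of expr & expr.

Definition addr (q : rat) : nat := `|Num.floor q|%N.

Fixpoint eval (M : mem) (e : expr) : rat :=
  match e with
  | ECst q => q
  | ELoad a => M (addr (eval M a))
  | EAdd a b => eval M a + eval M b
  | ESub a b => eval M a - eval M b
  | EMul a b => eval M a * eval M b
  | ELt a b => (if (eval M a < eval M b)%R then 1 else 0)
  | ELe a b => (if (eval M a <= eval M b)%R then 1 else 0)
  | EEq a b => (if (eval M a == eval M b)%R then 1 else 0)
  end.

Fixpoint esize (e : expr) : nat :=
  match e with
  | ECst _ => 1
  | ELoad a => (esize a).+1
  | EAdd a b | ESub a b | EMul a b | ELt a b | ELe a b | EEq a b =>
      (esize a + esize b).+1
  end.

Inductive cmd :=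
  | CSkip
  | CStore of expr & expr          (* M[addr a] := v *)
  | CSeq of cmd & cmd
  | CIf of expr & cmd & cmd        (* test: value <> 0 *)
  | CWhile of expr & cmd.

Definition upd (M : mem) (a : nat) (v : rat) : mem :=
  fun b => if b == a then v else M b.

Inductive exec : cmd -> mem -> nat -> mem -> Prop :=
  | exec_skip M : exec CSkip M 1 M
  | exec_store a v M :
      exec (CStore a v) M (esize a + esize v).+1
        (upd M (addr (eval M a)) (eval M v))
  | exec_seq c1 c2 M t1 M1 t2 M2 :
      exec c1 M t1 M1 -> exec c2 M1 t2 M2 -> exec (CSeq c1 c2) M (t1 + t2) M2
  | exec_if_true b c1 c2 M t M' :
      eval M b != 0 -> exec c1 M t M' -> exec (CIf b c1 c2) M (esize b + t).+1 M'
  | exec_if_false b c1 c2 M t M' :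
      eval M b = 0 -> exec c2 M t M' -> exec (CIf b c1 c2) M (esize b + t).+1 M'
  | exec_while_false b c M :
      eval M b = 0 -> exec (CWhile b c) M (esize b).+1 M
  | exec_while_true b c M t1 M1 t2 M2 :
      eval M b != 0 -> exec c M t1 M1 -> exec (CWhile b c) M1 t2 M2 ->
      exec (CWhile b c) M (esize b + t1 + t2).+1 M2.

Definition input_mem (n m : nat) (s : seq rat) : mem :=
  fun a => if a == 0%N then n%:R
           else if a == 1%N then m%:R
           else if (2 <= a < m.+2)%N then s`_(a - 2) else 0.

Definition outputs (n m : nat) (M : mem) (k : 'I_n -> nat) : Prop :=
  forall i : 'I_n, M (m.+2 + i)%N = (k i)%:R.

Definition computes_opt_in_O_nm2
    (SW : forall n m : nat, seq rat -> ('I_n -> nat) -> rat) (P : cmd) : Prop :=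
  exists C : nat,
  forall (n m : nat) (s : seq rat), (0 < n)%N -> scoring_vector m s ->
  exists (t : nat) (M' : mem),
    exec P (input_mem n m s) t M' /\ (t <= C * (n * m ^ 2 + 1))%N /\
    exists k : 'I_n -> nat,
      outputs m M' k /\ (\sum_(i < n) k i)%N = m /\
      forall k' : 'I_n -> nat, (\sum_(i < n) k' i)%N = m -> SW n m s k' <= SW n m s k.

(* Main.v *)
Require Import Defs.
From mathcomp Require Import all_boot all_order all_fingroup all_algebra.
From mathcomp Require Import zify lra.
From Stdlib Require Import FunctionalExtensionality.

Set Implicit Arguments. Unset Strict Implicit. Unset Printing Implicit Defensive.
Import Order.TTheory GRing.Theory Num.Theory.
Local Open Scope ring_scope.

Definition Pm (m : nat) (s : seq rat) (t : nat) : rat :=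
  \sum_(x <- take t (iota 0 m)) s`_x.

Lemma filter_notin_take (T : eqType) (L : seq T) c : uniq L ->
  [seq x <- L | x \notin take c L] = drop c L.
Proof.
move=> uL; set t := take c L.
suff: [seq x <- t ++ drop c L | x \notin t] = drop c L by rewrite cat_take_drop.
rewrite filter_cat.
have u2 := uL; rewrite -(cat_take_drop c L) cat_uniq -/t in u2.
case/and3P: u2 => _ hd _.
rewrite (@eq_in_filter _ _ pred0); last by move=> x hx /=; rewrite hx.
rewrite filter_pred0 /=.
rewrite (@eq_in_filter _ _ predT) ?filter_predT //.
move=> x hx /=; apply/negP => hx'; move/hasP: hd; apply; by exists x.
Qed.

Lemma takenS n m (prof : 'I_n -> {perm 'I_m}) (k : 'I_n -> nat) i :
  taken prof k i.+1 = taken prof k i ++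
    (if insub i is Some j then greedy_pick prof k j (taken prof k i) else [::]).
Proof. by []. Qed.

Section FC.
Variables (n m : nat) (p : {perm 'I_m}) (k : 'I_n -> nat).
Let ks := [seq k j | j <- enum 'I_n].

Lemma taken_FC i : (i <= n)%N ->
  taken (fun _ => p) k i = map p (take (sumn (take i ks)) (enum 'I_m)).
Proof.
elim: i => [|i IH] Hi; first by rewrite !take0.
have Hi' : (i < n)%N by [].
rewrite (takenS (fun=> p) k i) IH; last exact: ltnW.
rewrite insubT /greedy_pick.
have eT c : map p (take c (enum 'I_m)) = take c (map p (enum 'I_m)) by rewrite map_take.
rewrite !eT filter_notin_take; last by rewrite map_inj_uniq ?enum_uniq //; apply: perm_inj.
rewrite -takeD.
have sks : size ks = n by rewrite size_map size_enum_ord.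
rewrite (take_nth 0%N) ?sks // sumn_rcons.
rewrite /ks (nth_map (Ordinal Hi')) ?size_enum_ord //.
by rewrite (nth_ord_enum (Ordinal Hi') (Ordinal Hi')).
Qed.

Variable s : seq rat.
Lemma utility_FC (j : 'I_n) :
  utility s (fun _ => p) k j =
  Pm m s (sumn (take j.+1 ks)) - Pm m s (sumn (take j ks)).
Proof.
rewrite /utility /bundle /greedy_pick taken_FC; last exact: ltnW.
have eT c : map p (take c (enum 'I_m)) = take c (map p (enum 'I_m)) by rewrite map_take.
rewrite !eT filter_notin_take; last by rewrite map_inj_uniq ?enum_uniq //; apply: perm_inj.
have eD c d : take d (drop c (map p (enum 'I_m))) = map p (take d (drop c (enum 'I_m))).
  by rewrite -map_drop -map_take.
rewrite eD big_map.
under eq_bigr do rewrite permK.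
have sks : size ks = n by rewrite size_map size_enum_ord.
rewrite (take_nth 0%N) ?sks // sumn_rcons.
rewrite /ks (nth_map j) ?size_enum_ord // nth_ord_enum.
rewrite /Pm takeD big_cat /= addrC addrK.
rewrite -(big_map val predT (fun x => s`_x)).
by rewrite map_take map_drop val_enum_ord.
Qed.
End FC.

Lemma EU_FC_eq n m s (k : 'I_n -> nat) (j : 'I_n) :
  EU_FC m s k j = Pm m s (sumn (take j.+1 [seq k j | j <- enum 'I_n]))
                - Pm m s (sumn (take j [seq k j | j <- enum 'I_n])).
Proof.
rewrite /EU_FC.
under eq_bigr do rewrite utility_FC.
rewrite sumr_const card_Sn -[X in X / _]mulr_natr mulfK //.
by rewrite pnatr_eq0 -lt0n fact_gt0.
Qed.

Set Implicit Arguments. Unset Strict Implicit. Unset Printing Implicit Defensive.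
Import Order.TTheory GRing.Theory Num.Theory.
Local Open Scope ring_scope.

Section DP.
Variables (P : nat -> rat) (f : rat -> rat -> rat) (agg : seq rat -> rat).
Hypothesis P0 : P 0%N = 0.
Hypothesis Pmono : forall a b, (a <= b)%N -> P a <= P b.
Hypothesis fmono : forall x x' y, 0 <= y -> x <= x' -> f x y <= f x' y.
Hypothesis agg1 : forall y, agg [:: y] = y.
Hypothesis aggr : forall L y, L != [::] -> agg (rcons L y) = f (agg L) y.

Definition blocks (c : seq nat) : seq rat :=
  [seq P (sumn (take j.+1 c)) - P (sumn (take j c)) | j <- iota 0 (size c)].

Lemma blocks_rcons c x :
  blocks (rcons c x) = rcons (blocks c) (P (sumn c + x) - P (sumn c)).
Proof.
rewrite /blocks size_rcons -addn1 iotaD add0n map_cat cats1 /=.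
rewrite take_oversize ?size_rcons // sumn_rcons.
have -> : take (size c) (rcons c x) = c by rewrite -cats1 take_size_cat.
congr rcons; apply/eq_in_map => j; rewrite mem_iota add0n => /andP [_ hj].
by rewrite -cats1 !takel_cat // ltnW.
Qed.

Definition stepf (Vp : nat -> rat) (t : nat) (ba : rat * nat) (u : nat) :=
  let v := f (Vp u) (P t - P u) in if ba.1 < v then (v, u) else ba.

Definition best (Vp : nat -> rat) (t : nat) : rat * nat :=
  foldl (stepf Vp t) (f (Vp 0%N) (P t - P 0%N), 0%N) (iota 1 t).

Lemma foldl_inv Vp t l acc :
  let F u := f (Vp u) (P t - P u) in
  acc.1 = F acc.2 -> (acc.2 <= t)%N -> all (fun u => u <= t)%N l ->
  let r := foldl (stepf Vp t) acc l in
  [/\ r.1 = F r.2, (r.2 <= t)%N, acc.1 <= r.1 & forall u, u \in l -> F u <= r.1].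
Proof.
move=> F; elim: l acc => [|u l IH] [b a] /= hb ha hl.
  by split.
case/andP: hl => hu hl.
rewrite /stepf /=; case: ifP => hlt.
  have [r1 r2 r3 r4] := IH (F u, u) erefl hu hl.
  split => //; first by apply: le_trans r3; apply: ltW.
  move=> v; rewrite inE => /orP [/eqP -> //|]; exact: r4.
have [r1 r2 r3 r4] := IH (b, a) hb ha hl.
split => //; move=> v; rewrite inE => /orP [/eqP ->|]; last exact: r4.
apply: le_trans r3; by rewrite /F /= leNgt hlt.
Qed.

Lemma best_spec Vp t :
  let r := best Vp t in
  [/\ r.1 = f (Vp r.2) (P t - P r.2), (r.2 <= t)%N &
      forall u, (u <= t)%N -> f (Vp u) (P t - P u) <= r.1].
Proof.
have hl : all (fun u => u <= t)%N (iota 1 t).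
  by apply/allP => u; rewrite mem_iota; lia.
have [r1 r2 r3 r4] := foldl_inv (acc := (f (Vp 0%N) (P t - P 0%N), 0%N)) erefl (leq0n t) hl.
split => // u hu.
case: u hu => [|u] hu; first exact: r3.
apply: r4; rewrite mem_iota; lia.
Qed.

Fixpoint Vf (i : nat) : nat -> rat :=
  match i with
  | 0 => fun _ => 0
  | i'.+1 => if i' is 0 then P else fun t => (best (Vf i') t).1
  end.

Definition Af (i t : nat) : nat := (best (Vf i.-1) t).2.

Lemma agg_blocks_ub c : c != [::] -> agg (blocks c) <= Vf (size c) (sumn c).
Proof.
elim/last_ind: c => [//|c x IH] _.
rewrite blocks_rcons size_rcons sumn_rcons.
case: c IH => [|y c] IH.
  by rewrite /= agg1 P0 subr0 add0n.
rewrite aggr; last by rewrite /blocks.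
rewrite [size _]/= /=.
set c' := y :: c in IH *.
have [_ _ h3] := best_spec (Vf (size c')) (sumn c' + x).
apply: le_trans (h3 (sumn c') (leq_addr _ _)).
apply: fmono; last exact: IH.
by rewrite subr_ge0; apply: Pmono; apply: leq_addr.
Qed.

Fixpoint recf (i t : nat) : seq nat :=
  match i with
  | 0 => [::]
  | i'.+1 => if i' is 0 then [:: t] else rcons (recf i' (Af i t)) (t - Af i t)%N
  end.

Lemma recf_spec i t : (0 < i)%N ->
  [/\ size (recf i t) = i, sumn (recf i t) = t & agg (blocks (recf i t)) = Vf i t].
Proof.
elim: i t => [//|[|i] IH] t _.
  by split => //=; [rewrite addn0 | rewrite /blocks /= agg1 addn0 P0 subr0].
have [h1 h2 h3] := IH (Af i.+2 t) isT.
have [b1 b2 _] := best_spec (Vf i.+1) t.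
rewrite /= -/(Af i.+2 t) in b1 b2 *.
rewrite size_rcons h1 sumn_rcons h2 subnKC //; split => //.
rewrite blocks_rcons h2 subnKC // aggr; last first.
  by apply/eqP => /(congr1 size); rewrite /blocks size_map size_iota h1.
by rewrite h3 b1.
Qed.
End DP.

Set Implicit Arguments. Unset Strict Implicit. Unset Printing Implicit Defensive.
Import Order.TTheory GRing.Theory Num.Theory.
Local Open Scope ring_scope.

Lemma addr_nat (k : nat) : addr (k%:R) = k.
Proof. have -> : (k%:R : rat) = (k%:Z)%:~R by rewrite pmulrn.
by rewrite /addr intrKfloor. Qed.

Definition runs (c : cmd) (M : nat -> rat) (Q : (nat -> rat) -> Prop) (T : nat) : Prop :=
  exists t M', exec c M t M' /\ (t <= T)%N /\ Q M'.

Lemma runs_weaken c M (Q Q' : (nat -> rat) -> Prop) T T' :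
  runs c M Q T -> (T <= T')%N -> (forall M, Q M -> Q' M) -> runs c M Q' T'.
Proof. move=> [t [M' [h1 [h2 h3]]]] hT hQ; exists t, M'; split => //; split; [lia|auto]. Qed.

Lemma runs_seq c1 c2 M Q1 Q2 T1 T2 :
  runs c1 M Q1 T1 -> (forall M1, Q1 M1 -> runs c2 M1 Q2 T2) ->
  runs (CSeq c1 c2) M Q2 (T1 + T2).
Proof.
move=> [t1 [M1 [e1 [h1 q1]]]] H; have [t2 [M2 [e2 [h2 q2]]]] := H _ q1.
exists (t1 + t2)%N, M2; split; first exact: exec_seq e1 e2.
split => //; lia.
Qed.

Lemma runs_store a v M (Q : (nat -> rat) -> Prop) :
  Q (upd M (addr (eval M a)) (eval M v)) -> runs (CStore a v) M Q (esize a + esize v).+1.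
Proof. move=> h; exists (esize a + esize v).+1; eexists; split; [exact: exec_store|by split]. Qed.

Lemma runs_skip M (Q : (nat -> rat) -> Prop) : Q M -> runs CSkip M Q 1.
Proof. move=> h; exists 1%N, M; split; [exact: exec_skip|by split]. Qed.

Lemma runs_if_true b c1 c2 M Q T :
  eval M b != 0 -> runs c1 M Q T -> runs (CIf b c1 c2) M Q (esize b + T).+1.
Proof.
move=> hb [t [M' [e [h q]]]]; exists (esize b + t).+1, M'; split; first exact: exec_if_true.
split => //; lia.
Qed.

Lemma runs_if_false b c1 c2 M Q T :
  eval M b = 0 -> runs c2 M Q T -> runs (CIf b c1 c2) M Q (esize b + T).+1.
Proof.
move=> hb [t [M' [e [h q]]]]; exists (esize b + t).+1, M'; split; first exact: exec_if_false.
split => //; lia.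
Qed.

Lemma runs_while b c (Inv : nat -> (nat -> rat) -> Prop) N T M0 :
  (forall i M, (i < N)%N -> Inv i M -> eval M b != 0 /\ runs c M (Inv i.+1) T) ->
  (forall M, Inv N M -> eval M b = 0) -> Inv 0%N M0 ->
  runs (CWhile b c) M0 (Inv N) (N * (esize b + T).+1 + (esize b).+1).
Proof.
move=> Hstep Hend H0.
suff: forall d i M, (i + d)%N = N -> Inv i M ->
    runs (CWhile b c) M (Inv N) (d * (esize b + T).+1 + (esize b).+1).
  by move=> h; apply: (h N 0%N); rewrite ?add0n.
elim=> [|d IH] i M hi hM.
  rewrite addn0 in hi; subst i.
  exists (esize b).+1, M; split; first exact: exec_while_false (Hend _ hM).
  by split.
have hiN : (i < N)%N by lia.
have [hb [t1 [M1 [e1 [h1 q1]]]]] := Hstep _ _ hiN hM.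
have [t2 [M2 [e2 [h2 q2]]]] := IH i.+1 M1 ltac:(lia) q1.
exists (esize b + t1 + t2).+1, M2; split; first exact: exec_while_true e2.
split => //; lia.
Qed.

Lemma upd_eq M a v : upd M a v a = v.
Proof. by rewrite /upd eqxx. Qed.
Lemma upd_neq M a v b : b <> a -> upd M a v b = M b.
Proof. by rewrite /upd => /eqP/negbTE ->. Qed.

Lemma runs_seq_store a v c M Q T :
  runs c (upd M (addr (eval M a)) (eval M v)) Q T ->
  runs (CSeq (CStore a v) c) M Q ((esize a + esize v).+1 + T).
Proof.
move=> h; apply: (runs_seq (Q1 := fun M' => M' = upd M (addr (eval M a)) (eval M v))).
  exact: runs_store.
by move=> M1 ->.
Qed.

Lemma runs_weakenT c M Q T T' : runs c M Q T -> (T <= T')%N -> runs c M Q T'.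
Proof. move=> h hT; exact: runs_weaken h hT _. Qed.

Set Implicit Arguments. Unset Strict Implicit. Unset Printing Implicit Defensive.
Import Order.TTheory GRing.Theory Num.Theory.
Local Open Scope ring_scope.

Definition cst (k : nat) := ECst k%:R.
Definition nE := ELoad (cst 0).
Definition mE := ELoad (cst 1).
Definition baseE := EAdd (EAdd nE mE) (cst 2).
Definition varA j := EAdd baseE (cst j).
Definition ld j := ELoad (varA j).
Definition PA e := EAdd baseE (EAdd (cst 6) e).
Definition VA ei et :=
  EAdd baseE (EAdd (cst 7) (EAdd mE (EAdd (EMul ei (EAdd mE (cst 1))) et))).
Definition AA ei et := EAdd (VA ei et) (EMul (EAdd nE (cst 1)) (EAdd mE (cst 1))).
Definition OA e := EAdd mE (EAdd (cst 2) e).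

Lemma eval_Add M a b : eval M (EAdd a b) = eval M a + eval M b. Proof. by []. Qed.
Lemma eval_Sub M a b : eval M (ESub a b) = eval M a - eval M b. Proof. by []. Qed.
Lemma eval_Mul M a b : eval M (EMul a b) = eval M a * eval M b. Proof. by []. Qed.
Lemma eval_Load M a : eval M (ELoad a) = M (addr (eval M a)). Proof. by []. Qed.
Lemma eval_cst M k : eval M (cst k) = k%:R. Proof. by []. Qed.
Lemma eval_Le M a b : eval M (ELe a b) = if eval M a <= eval M b then 1 else 0. Proof. by []. Qed.
Lemma eval_Lt M a b : eval M (ELt a b) = if eval M a < eval M b then 1 else 0. Proof. by []. Qed.

Section Addr.
Variables (n m : nat).
Definition base := (n + m + 2)%N.
Definition va j := (base + j)%N.
Definition pa t := (base + (6 + t))%N.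
Definition vaa i t := (base + (7 + (m + (i * (m + 1) + t))))%N.
Definition aa i t := (vaa i t + (n + 1) * (m + 1))%N.
Definition oa j := (m + (2 + j))%N.

Definition ctx (M : nat -> rat) := M 0%N = n%:R /\ M 1%N = m%:R.

Ltac ev := rewrite ?eval_Add ?eval_Sub ?eval_Mul ?eval_Load ?eval_cst ?addr_nat.

Lemma eval_nE M : ctx M -> eval M nE = n%:R.
Proof. by case=> h0 h1; rewrite /nE; ev. Qed.
Lemma eval_mE M : ctx M -> eval M mE = m%:R.
Proof. by case=> h0 h1; rewrite /mE; ev. Qed.
Lemma eval_baseE M : ctx M -> eval M baseE = base%:R.
Proof. by move=> c; rewrite /baseE !eval_Add eval_nE // eval_mE // eval_cst -!natrD. Qed.
Lemma eval_varA M j : ctx M -> eval M (varA j) = (va j)%:R.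
Proof. by move=> c; rewrite /varA eval_Add eval_baseE // eval_cst -!natrD. Qed.
Lemma eval_ld M j : ctx M -> eval M (ld j) = M (va j).
Proof. by move=> c; rewrite /ld eval_Load eval_varA // addr_nat. Qed.
Lemma eval_PA M e k : ctx M -> eval M e = k%:R -> eval M (PA e) = (pa k)%:R.
Proof. by move=> c he; rewrite /PA eval_Add eval_baseE // eval_Add eval_cst he -!natrD. Qed.
Lemma eval_VA M ei et i t : ctx M -> eval M ei = i%:R -> eval M et = t%:R ->
  eval M (VA ei et) = (vaa i t)%:R.
Proof.
move=> c hi ht; rewrite /VA eval_Add eval_baseE // !eval_Add eval_Mul eval_Add eval_mE // !eval_cst hi ht.
by rewrite -!natrD -natrM -!natrD.
Qed.
Lemma eval_AA M ei et i t : ctx M -> eval M ei = i%:R -> eval M et = t%:R ->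
  eval M (AA ei et) = (aa i t)%:R.
Proof.
move=> c hi ht; rewrite /AA eval_Add (eval_VA c hi ht) eval_Mul !eval_Add eval_nE // eval_mE // eval_cst.
by rewrite -!natrD -natrM -!natrD.
Qed.
Lemma eval_OA M e k : ctx M -> eval M e = k%:R -> eval M (OA e) = (oa k)%:R.
Proof. by move=> c he; rewrite /OA !eval_Add eval_mE // eval_cst he -!natrD. Qed.

Lemma idx_inj i t i' t' : (t <= m)%N -> (t' <= m)%N ->
  (i * (m + 1) + t = i' * (m + 1) + t')%N -> i = i' /\ t = t'.
Proof.
move=> ht ht' h.
have e1 : ((i * (m + 1) + t) %/ (m + 1) = i)%N by rewrite divnMDl ?addn1 // divn_small ?addn0 // ltnS.
have e2 : ((i' * (m + 1) + t') %/ (m + 1) = i')%N by rewrite divnMDl ?addn1 // divn_small ?addn0 // ltnS.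
have ei : i = i' by rewrite -e1 -e2 h.
subst i'; split => //; lia.
Qed.

Lemma idx_lt i t : (i <= n)%N -> (t <= m)%N -> (i * (m + 1) + t < (n + 1) * (m + 1))%N.
Proof.
move=> hi ht; apply: (@leq_trans ((i + 1) * (m + 1))); first by rewrite mulnDl mul1n ltn_add2l addn1 ltnS.
by rewrite leq_mul2r leq_add2r hi orbT.
Qed.

Lemma vaa_inj i t i' t' : (t <= m)%N -> (t' <= m)%N -> vaa i t = vaa i' t' -> i = i' /\ t = t'.
Proof. move=> h1 h2; rewrite /vaa => h; apply: idx_inj => //; lia. Qed.

Lemma aa_inj i t i' t' : (t <= m)%N -> (t' <= m)%N -> aa i t = aa i' t' -> i = i' /\ t = t'.
Proof. move=> h1 h2; rewrite /aa => h; apply: vaa_inj => //; lia. Qed.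

Lemma aa_vaa i t i' t' : (i' <= n)%N -> (t' <= m)%N -> aa i t <> vaa i' t'.
Proof. move=> h1 h2; have := idx_lt h1 h2; rewrite /aa /vaa; lia. Qed.

End Addr.

Set Implicit Arguments. Unset Strict Implicit. Unset Printing Implicit Defensive.
Import Order.TTheory GRing.Theory Num.Theory.
Local Open Scope ring_scope.

Definition FEu (fe : expr -> expr -> expr) : expr := fe (ELoad (VA (ESub (ld 0) (cst 1)) (ld 2)))
                       (ESub (ELoad (PA (ld 1))) (ELoad (PA (ld 2)))).
Definition FE0 (fe : expr -> expr -> expr) : expr := fe (ELoad (VA (ESub (ld 0) (cst 1)) (cst 0)))
                       (ESub (ELoad (PA (ld 1))) (ELoad (PA (cst 0)))).
Definition c_ubody fe :=
  CSeq (CIf (ELt (ld 3) (FEu fe))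
            (CSeq (CStore (varA 3) (FEu fe)) (CStore (varA 4) (ld 2))) CSkip)
       (CStore (varA 2) (EAdd (ld 2) (cst 1))).
Definition c_u fe := CWhile (ELe (ld 2) (ld 1)) (c_ubody fe).
Definition c_tbody fe :=
  CSeq (CStore (varA 3) (FE0 fe))
  (CSeq (CStore (varA 4) (cst 0))
  (CSeq (CStore (varA 2) (cst 1))
  (CSeq (c_u fe)
  (CSeq (CStore (VA (ld 0) (ld 1)) (ld 3))
  (CSeq (CStore (AA (ld 0) (ld 1)) (ld 4))
        (CStore (varA 1) (EAdd (ld 1) (cst 1)))))))).
Definition c_t fe := CWhile (ELe (ld 1) mE) (c_tbody fe).
Definition c_dpbody fe :=
  CSeq (CStore (varA 1) (cst 0)) (CSeq (c_t fe) (CStore (varA 0) (EAdd (ld 0) (cst 1)))).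
Definition c_dp fe := CSeq (CStore (varA 0) (cst 2)) (CWhile (ELe (ld 0) nE) (c_dpbody fe)).
Definition c_recbody :=
  CSeq (CStore (OA (ESub (ld 0) (cst 1))) (ESub (ld 1) (ELoad (AA (ld 0) (ld 1)))))
  (CSeq (CStore (varA 1) (ELoad (AA (ld 0) (ld 1))))
        (CStore (varA 0) (ESub (ld 0) (cst 1)))).
Definition c_rec :=
  CSeq (CStore (varA 1) mE)
  (CSeq (CStore (varA 0) nE)
  (CSeq (CWhile (ELt (cst 1) (ld 0)) c_recbody)
        (CStore (OA (cst 0)) (ld 1)))).
Definition Kc fe := (esize (FEu fe) + esize (FE0 fe) + 100)%N.

Definition c_row1 :=
  CSeq (CStore (varA 1) (cst 0))
   (CWhile (ELe (ld 1) mE)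
     (CSeq (CStore (VA (cst 1) (ld 1)) (ELoad (PA (ld 1))))
           (CStore (varA 1) (EAdd (ld 1) (cst 1))))).

Definition c_pre :=
  CSeq (CStore (PA (cst 0)) (cst 0))
  (CSeq (CStore (varA 1) (cst 1))
   (CWhile (ELe (ld 1) mE)
     (CSeq (CStore (PA (ld 1)) (EAdd (ELoad (PA (ESub (ld 1) (cst 1))))
                                     (ELoad (EAdd (cst 1) (ld 1)))))
           (CStore (varA 1) (EAdd (ld 1) (cst 1)))))).

Definition prog fe :=
  CIf (ELt (cst 0) mE) (CSeq c_pre (CSeq c_row1 (CSeq (c_dp fe) c_rec))) CSkip.

Lemma upd_ctx n m M a v : (m + 2 <= a)%N -> ctx n m M -> ctx n m (upd M a v).
Proof. move=> ha [h0 h1]; split; rewrite upd_neq //; lia. Qed.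

Lemma natr_sub1 (i : nat) : (i.+1)%:R - 1%:R = i%:R :> rat.
Proof. by rewrite -addn1 natrD addrK. Qed.

Section Main.
Variables (n m : nat) (s : seq rat).
Hypothesis Hm : (0 < m)%N.
Hypothesis Hn : (0 < n)%N.
Hypothesis Hsz : size s = m.
Hypothesis Hnn : forall j, 0 <= s`_j.
Local Notation P := (Pm m s).
Local Notation va := (va n m).
Local Notation pa := (pa n m).
Local Notation vaa := (vaa n m).
Local Notation aa := (aa n m).
Local Notation oa := (oa m).
Local Notation ctx := (ctx n m).

Definition Sok (M : nat -> rat) := forall j, (j < m)%N -> M (2 + j)%N = s`_j.

Lemma upd_Sok M a v : (m + 2 <= a)%N -> Sok M -> Sok (upd M a v).
Proof. move=> ha h j hj; rewrite upd_neq ?h //; lia. Qed.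

Lemma P_succ t : (t < m)%N -> P t.+1 = P t + s`_t.
Proof.
move=> ht; rewrite /Pm (take_nth 0%N) ?size_iota // -cats1 big_cat big_seq1.
by rewrite nth_iota.
Qed.

Lemma P0 : P 0%N = 0.
Proof. by rewrite /Pm take0 big_nil. Qed.

Lemma Pmono a b : (a <= b)%N -> P a <= P b.
Proof.
move=> hab; rewrite /Pm -(subnKC hab) takeD big_cat /= lerDl.
by apply: sumr_ge0.
Qed.

Lemma ev_varA M j : ctx M -> eval M (varA j) = (va j)%:R.
Proof. exact: eval_varA. Qed.
Lemma ev_ld M j : ctx M -> eval M (ld j) = M (va j).
Proof. exact: eval_ld. Qed.
Lemma ev_mE M : ctx M -> eval M mE = m%:R.
Proof. exact: eval_mE. Qed.
Lemma ev_nE M : ctx M -> eval M nE = n%:R.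
Proof. exact: eval_nE. Qed.
Lemma ev_PA M e k : ctx M -> eval M e = k%:R -> eval M (PA e) = (pa k)%:R.
Proof. exact: eval_PA. Qed.
Lemma ev_VA M ei et i t : ctx M -> eval M ei = i%:R -> eval M et = t%:R ->
  eval M (VA ei et) = (vaa i t)%:R.
Proof. exact: eval_VA. Qed.
Lemma ev_AA M ei et i t : ctx M -> eval M ei = i%:R -> eval M et = t%:R ->
  eval M (AA ei et) = (aa i t)%:R.
Proof. exact: eval_AA. Qed.
Lemma ev_OA M e k : ctx M -> eval M e = k%:R -> eval M (OA e) = (oa k)%:R.
Proof. exact: eval_OA. Qed.

Definition pre_inv i (M : nat -> rat) := [/\ ctx M, Sok M, M (va 1) = (i.+1)%:R &
  forall t, (t <= i)%N -> M (pa t) = P t].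

Lemma pre_step i M : (i < m)%N -> pre_inv i M ->
  eval M (ELe (ld 1) mE) != 0 /\
  runs (CSeq (CStore (PA (ld 1)) (EAdd (ELoad (PA (ESub (ld 1) (cst 1))))
                                     (ELoad (EAdd (cst 1) (ld 1)))))
           (CStore (varA 1) (EAdd (ld 1) (cst 1)))) M (pre_inv i.+1) 100.
Proof.
move=> hi [c0 s0 v0 p0].
have el : eval M (ld 1) = (i.+1)%:R by rewrite ev_ld.
split; first by rewrite eval_Le el ev_mE // ler_nat hi oner_eq0.
apply: runs_weakenT; first apply: runs_seq_store.
  set M1 := upd _ _ _.
  have e1 : addr (eval M (PA (ld 1))) = pa i.+1 by rewrite (ev_PA c0 el) addr_nat.
  have c1 : ctx M1 by apply: upd_ctx => //; rewrite e1 /pa /base; lia.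
  have s1 : Sok M1 by apply: upd_Sok => //; rewrite e1 /pa /base; lia.
  apply: runs_store.
  have e2 : addr (eval M1 (varA 1)) = va 1 by rewrite ev_varA // addr_nat.
  rewrite e2; split.
  - by apply: upd_ctx => //; rewrite /va /base; lia.
  - by apply: upd_Sok => //; rewrite /va /base; lia.
  - rewrite upd_eq eval_Add ev_ld // /M1 upd_neq; last by rewrite e1 /pa /va; lia.
    by rewrite v0 eval_cst -natrD addn1.
  - move=> t ht; rewrite upd_neq; last by rewrite /pa /va; lia.
    rewrite /M1 e1; case: (ltngtP t i.+1) ht => // [ht _|-> _].
      by rewrite upd_neq; [apply: p0; lia | rewrite /pa; lia].
    rewrite upd_eq eval_Add !eval_Load (ev_PA c0 (e:=ESub (ld 1) (cst 1)) (k:=i)); last first.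
      by rewrite eval_Sub el eval_cst natr_sub1.
    rewrite eval_Add eval_cst el -natrD addr_nat p0 // P_succ //.
    by rewrite addr_nat -(s0 _ hi) add1n.
by rewrite /=.
Qed.

Lemma pre_ok M : ctx M -> Sok M ->
  runs c_pre M (pre_inv m) (60 + m * 120).
Proof.
move=> c0 s0.
set M1 := upd M (addr (eval M (PA (cst 0)))) (eval M (cst 0)).
have e1 : addr (eval M (PA (cst 0))) = pa 0 by rewrite (eval_PA c0 (eval_cst _ _)) addr_nat.
have c1 : ctx M1 by apply: upd_ctx => //; rewrite e1 /pa /base; lia.
have s1 : Sok M1 by apply: upd_Sok => //; rewrite e1 /pa /base; lia.
set M2 := upd M1 (addr (eval M1 (varA 1))) (eval M1 (cst 1)).
have e2 : addr (eval M1 (varA 1)) = va 1 by rewrite (@eval_varA n m M1 1 c1) addr_nat.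
have c2 : ctx M2 by apply: upd_ctx => //; rewrite e2 /va /base; lia.
have s2 : Sok M2 by apply: upd_Sok => //; rewrite e2 /va /base; lia.
have I0 : pre_inv 0 M2.
  split => //; first by rewrite /M2 e2 upd_eq.
  move=> t; rewrite leqn0 => /eqP ->; rewrite /M2 e2 upd_neq; last by rewrite /pa /va; lia.
  by rewrite /M1 e1 upd_eq eval_cst P0.
apply: runs_weakenT; first (apply: runs_seq_store; apply: runs_seq_store).
  apply: (@runs_while _ _ pre_inv m 100 _ _ _ I0).
    by move=> i M' hi hM; apply: pre_step.
  move=> M' [c' _ v' _]; rewrite eval_Le ev_ld // v' ev_mE // ler_nat.
  by rewrite ltnn.
rewrite /=; lia.
Qed.

Variable f : rat -> rat -> rat.
Local Notation V := (Vf P f).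
Local Notation A := (Af P f).

Definition Pok (M : nat -> rat) := forall t, (t <= m)%N -> M (pa t) = P t.
Definition rowsOK (M : nat -> rat) I T := forall i' t', (1 <= i')%N -> (t' <= m)%N ->
  ((i' < I)%N \/ (i' = I /\ (t' < T)%N)) ->
  M (vaa i' t') = V i' t' /\ ((2 <= i')%N -> M (aa i' t') = (A i' t')%:R).
Definition good M I T := [/\ ctx M, Pok M & rowsOK M I T].

Lemma good_var M I T j v : (j < 6)%N -> good M I T -> good (upd M (va j) v) I T.
Proof.
move=> hj [c p r]; split.
- by apply: upd_ctx => //; rewrite /va /base; lia.
- by move=> t ht; rewrite upd_neq ?p //; rewrite /va /pa; lia.
- move=> i' t' h1 h2 h3; have [r1 r2] := r i' t' h1 h2 h3.
  rewrite !upd_neq ?r1; first (split => // h; rewrite r2 //).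
  + by rewrite /aa /vaa /va; lia.
  + by rewrite /vaa /va; lia.
Qed.

Lemma rows_ext M M' I T : (1 <= I <= n)%N -> (T <= m)%N -> rowsOK M I T ->
  M' (vaa I T) = V I T -> ((2 <= I)%N -> M' (aa I T) = (A I T)%:R) ->
  (forall b, b <> vaa I T -> b <> aa I T -> M' b = M b) -> rowsOK M' I T.+1.
Proof.
move=> /andP [hI1 hIn] hT r hv ha hM i' t' h1 h2 h3.
have hi'n : (i' <= I)%N by case: h3 => [/ltnW|[-> _]].
case: (boolP ((i' == I) && (t' == T))) => [/andP [/eqP e1 /eqP e2]|hne].
  by subst; split.
have h3' : (i' < I)%N \/ i' = I /\ (t' < T)%N.
  case: h3 => [|[e ht]]; [by left|right; split => //].
  subst; rewrite eqxx /= in hne; rewrite ltnS leq_eqVlt in ht.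
  by case/orP: ht => // /eqP e; rewrite e eqxx in hne.
have [r1 r2] := r i' t' h1 h2 h3'.
have d1 : vaa i' t' <> vaa I T.
  by move=> e; have [e1 e2] := vaa_inj h2 hT e; subst; rewrite !eqxx in hne.
have d2 : vaa i' t' <> aa I T.
  by move=> e; symmetry in e; apply: (aa_vaa (n:=n) (i:=I) (t:=T) _ h2 e); lia.
have d3 : aa i' t' <> vaa I T by apply: (aa_vaa (n:=n)).
have d4 : aa i' t' <> aa I T.
  by move=> e; have [e1 e2] := aa_inj h2 hT e; subst; rewrite !eqxx in hne.
rewrite hM // r1; split => // h; rewrite hM // r2 //.
Qed.

Lemma rows_next M I : rowsOK M I m.+1 -> rowsOK M I.+1 0.
Proof.
move=> r i' t' h1 h2 h3; apply: r => //.
case: h3 => [|[]] //; rewrite ltnS leq_eqVlt => /orP [/eqP ->|]; [right|left] => //.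
Qed.

Definition row1_inv e M := good M 1 e /\ M (va 1) = e%:R.

Lemma row1_ok M : ctx M -> Pok M ->
  runs c_row1 M (row1_inv m.+1) (20 + m.+1 * 100).
Proof.
move=> c0 p0.
apply: runs_weakenT; first apply: runs_seq_store.
  apply: (@runs_while _ _ row1_inv m.+1 80).
  - move=> e M' he [[c' p' r'] v'].
    have el : eval M' (ld 1) = e%:R by rewrite ev_ld.
    split; first by rewrite eval_Le el ev_mE // ler_nat -ltnS he oner_eq0.
    apply: runs_weakenT; first apply: runs_seq_store.
      have e1 : addr (eval M' (VA (cst 1) (ld 1))) = vaa 1 e by rewrite (ev_VA c' (eval_cst _ _) el) addr_nat.
      set M1 := upd _ _ _.
      have g1 : good M1 1 e.+1.
        split.
        + by apply: upd_ctx; [rewrite e1 /vaa /base; lia|].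
        + by move=> t ht; rewrite /M1 e1 upd_neq ?p' //; rewrite /vaa /pa; lia.
        + apply: (rows_ext (M := M')).
          * by rewrite /= Hn.
          * lia.
          * done.
          * rewrite /M1 e1 upd_eq eval_Load (ev_PA c' el) addr_nat p' //; lia.
          * by [].
          * by move=> b h1 h2; rewrite /M1 e1 upd_neq.
      apply: runs_store.
      have e2 : addr (eval M1 (varA 1)) = va 1 by case: g1 => c1 _ _; rewrite ev_varA // addr_nat.
      rewrite e2; split; first exact: good_var.
      rewrite upd_eq eval_Add ev_ld; last by case: g1.
      rewrite /M1 e1 upd_neq; last by rewrite /vaa /va; lia.
      by rewrite v' eval_cst -natrD addn1.
    by [].
  - move=> M' [[c' _ _] v']; rewrite eval_Le ev_ld // v' ev_mE // ler_nat.
    by rewrite ltnn.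
  - have e2 : addr (eval M (varA 1)) = va 1 by rewrite ev_varA // addr_nat.
    rewrite e2; split; last by rewrite upd_eq.
    apply: good_var => //; split => // i' t' h1 h2; lia.
by rewrite /=; lia.
Qed.

Variable fe : expr -> expr -> expr.
Hypothesis Hfe : forall M a b, eval M (fe a b) = f (eval M a) (eval M b).
Local Notation K := (Kc fe).

Definition bst I T g :=
  foldl (stepf P f (V I.-1) T) (f (V I.-1 0%N) (P T - P 0%N), 0%N) (iota 1 g).

Definition u_inv I T g M := [/\ good M I T, M (va 0) = I%:R, M (va 1) = T%:R,
  M (va 2) = g.+1%:R & M (va 3) = (bst I T g).1 /\ M (va 4) = (bst I T g).2%:R].

Lemma ev_Im1 M I : ctx M -> (1 <= I)%N -> M (va 0) = I%:R ->
  eval M (ESub (ld 0) (cst 1)) = (I.-1)%:R.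
Proof. by move=> c hI h; rewrite eval_Sub ev_ld // h eval_cst -{1}(prednK hI) natr_sub1. Qed.

Lemma ev_FEu M I T g : (2 <= I <= n)%N -> (g < T)%N -> (T <= m)%N -> u_inv I T g M ->
  eval M (FEu fe) = f (V I.-1 g.+1) (P T - P g.+1).
Proof.
move=> /andP [hI hIn] hg hT [[c p r] v0 v1 v2 _].
have e0 := ev_Im1 c (ltnW hI) v0.
have el1 : eval M (ld 1) = T%:R by rewrite ev_ld.
have el2 : eval M (ld 2) = g.+1%:R by rewrite ev_ld.
rewrite /FEu Hfe eval_Sub !eval_Load (ev_VA c e0 el2) (ev_PA c el1) (ev_PA c el2) !addr_nat.
rewrite (p T hT) (p g.+1 ltac:(lia)).
have [r1 _] := r I.-1 g.+1 ltac:(lia) ltac:(lia) ltac:(lia).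
by rewrite r1.
Qed.

Lemma u_step I T g M : (2 <= I <= n)%N -> (T <= m)%N -> (g < T)%N -> u_inv I T g M ->
  eval M (ELe (ld 2) (ld 1)) != 0 /\ runs (c_ubody fe) M (u_inv I T g.+1) (3 * K).
Proof.
move=> hIn hT hg hM.
have hFE := ev_FEu hIn hg hT hM.
case: hM => [[c p r] v0 v1 v2 [v3 v4]].
split; first by rewrite eval_Le !ev_ld // v1 v2 ler_nat hg oner_eq0.
set r0 := bst I T g.
set vv := f (V I.-1 g.+1) (P T - P g.+1).
set r1 := stepf P f (V I.-1) T r0 g.+1.
have er1 : bst I T g.+1 = r1 by rewrite /bst -[g.+1]addn1 iotaD foldl_cat /= add1n.
pose Q1 M := [/\ good M I T, M (va 0) = I%:R, M (va 1) = T%:R,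
  M (va 2) = g.+1%:R & M (va 3) = r1.1 /\ M (va 4) = r1.2%:R].
apply: runs_weakenT.
  apply: (runs_seq (Q1 := Q1)).
    case: (boolP (r0.1 < vv)) => hlt.
      apply: runs_if_true.
        by rewrite eval_Lt ev_ld // v3 hFE -/vv hlt oner_eq0.
      apply: runs_seq_store; apply: runs_store.
      rewrite ev_varA // addr_nat.
      have g1 : good (upd M (va 3) (eval M (FEu fe))) I T by apply: good_var.
      have c1 : ctx (upd M (va 3) (eval M (FEu fe))) by case: g1.
      rewrite ev_varA // addr_nat; split.
      - exact: good_var.
      - by rewrite !upd_neq ?v0 // /va; lia.
      - by rewrite !upd_neq ?v1 // /va; lia.
      - by rewrite !upd_neq ?v2 // /va; lia.
      - have hr1 : r1 = (vv, g.+1) by rewrite /r1 /stepf -/vv hlt.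
        rewrite hr1; split.
          by rewrite upd_neq ?upd_eq ?hFE // /va; lia.
        by rewrite upd_eq ev_ld // upd_neq ?v2 // /va; lia.
    apply: runs_if_false.
      by rewrite eval_Lt ev_ld // v3 hFE -/vv (negbTE hlt).
    apply: runs_weakenT; first apply: runs_skip; last by []. split => //.
    by rewrite /r1 /stepf -/vv (negbTE hlt) -/r0 v3 v4.
  move=> M1 [g1 w0 w1 w2 [w3 w4]].
  have c1 : ctx M1 by case: g1.
  apply: runs_store; rewrite ev_varA // addr_nat; split.
  - exact: good_var.
  - by rewrite upd_neq ?w0 // /va; lia.
  - by rewrite upd_neq ?w1 // /va; lia.
  - by rewrite upd_eq eval_Add ev_ld // w2 eval_cst -natrD addn1.
  - by rewrite er1 !upd_neq ?w3 ?w4 // /va; lia.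
rewrite /Kc /=; lia.
Qed.

Lemma u_loop I T M : (2 <= I <= n)%N -> (T <= m)%N -> u_inv I T 0 M ->
  runs (c_u fe) M (u_inv I T T) (m.+1 * (4 * K)).
Proof.
move=> hIn hT h0.
apply: runs_weakenT.
  apply: (@runs_while _ _ (u_inv I T) T (3 * K) _ _ _ h0).
    by move=> g M' hg hM; apply: u_step.
  move=> M' [[c' _ _] _ w1 w2 _]; rewrite eval_Le !ev_ld // w1 w2 ler_nat ltnn.
  by [].
have hK : (100 <= K)%N by rewrite /Kc; lia.
have := leq_mul hT (leqnn (3 * K + 22)).
set KK := K; cbn [esize cst varA ld baseE nE mE PA VA AA OA]; nia.
Qed.

Lemma V_best I t : (2 <= I)%N -> V I t = (best P f (V I.-1) t).1.
Proof. by case: I => [|[|I]]. Qed.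

Definition t_inv I e M := [/\ good M I e, M (va 0) = I%:R & M (va 1) = e%:R].

Lemma t_step I e M : (2 <= I <= n)%N -> (e < m.+1)%N -> t_inv I e M ->
  eval M (ELe (ld 1) mE) != 0 /\ runs (c_tbody fe) M (t_inv I e.+1) (m.+1 * (4 * K) + 5 * K).
Proof.
move=> hIn he [[c p r] v0 v1].
case/andP: (hIn) => hI2 hIn'.
split; first by rewrite eval_Le ev_ld // v1 ev_mE // ler_nat -ltnS he oner_eq0.
have e0 := ev_Im1 c (ltnW hI2) v0.
have el1 : eval M (ld 1) = e%:R by rewrite ev_ld.
have hFE0 : eval M (FE0 fe) = f (V I.-1 0) (P e - P 0).
  rewrite /FE0 Hfe eval_Sub !eval_Load (ev_VA c e0 (eval_cst _ 0)) (ev_PA c el1).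
  rewrite (ev_PA c (eval_cst _ 0)) !addr_nat (p e ltac:(lia)) (p 0%N ltac:(lia)).
  have [r1 _] := r I.-1 0%N ltac:(lia) ltac:(lia) ltac:(lia).
  by rewrite r1.
apply: runs_weakenT.
  apply: runs_seq_store; rewrite ev_varA // addr_nat.
  set M1 := upd M _ _.
  have g1 : good M1 I e by apply: good_var.
  have c1 : ctx M1 by case: g1.
  apply: runs_seq_store; rewrite ev_varA // addr_nat.
  set M2 := upd M1 _ _.
  have g2 : good M2 I e by apply: good_var.
  have c2 : ctx M2 by case: g2.
  apply: runs_seq_store; rewrite ev_varA // addr_nat.
  set M3 := upd M2 _ _.
  have g3 : good M3 I e by apply: good_var.
  have c3 : ctx M3 by case: g3.
  have u0 : u_inv I e 0 M3.
    split => //.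
    - by rewrite /M3 /M2 /M1 !upd_neq ?v0 // /va; lia.
    - by rewrite /M3 /M2 /M1 !upd_neq ?v1 // /va; lia.
    - by rewrite /M3 upd_eq eval_cst.
    - split.
        rewrite /M3 /M2 upd_neq; last by rewrite /va; lia.
        rewrite upd_neq; last by rewrite /va; lia.
        by rewrite /M1 upd_eq hFE0.
      by rewrite /M3 /M2 upd_neq ?upd_eq ?eval_cst // /va; lia.
  apply: (runs_seq (Q1 := u_inv I e e)); first exact: u_loop u0.
  move=> M4 [[c4 p4 r4] w0 w1 w2 [w3 w4]].
  have ei : eval M4 (ld 0) = I%:R by rewrite ev_ld.
  have et : eval M4 (ld 1) = e%:R by rewrite ev_ld.
  apply: runs_seq_store; rewrite (ev_VA c4 ei et) addr_nat.
  set M5 := upd M4 _ _.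
  have c5 : ctx M5 by apply: upd_ctx => //; rewrite /vaa /base; lia.
  have ei5 : eval M5 (ld 0) = I%:R by rewrite ev_ld // /M5 upd_neq // /va /vaa; lia.
  have et5 : eval M5 (ld 1) = e%:R by rewrite ev_ld // /M5 upd_neq // /va /vaa; lia.
  apply: runs_seq_store; rewrite (ev_AA c5 ei5 et5) addr_nat.
  set M6 := upd M5 _ _.
  have hv : M6 (vaa I e) = V I e.
    rewrite /M6 upd_neq; last by apply: not_eq_sym; apply: (aa_vaa (n:=n)); lia.
    by rewrite /M5 upd_eq ev_ld // w3 V_best.
  have ha : M6 (aa I e) = (A I e)%:R.
    by rewrite /M6 upd_eq ev_ld // /M5 upd_neq ?w4 // /va /vaa; lia.
  have g6 : good M6 I e.+1.
    split.
    - apply: upd_ctx => //; last by rewrite /aa /vaa /base; lia.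
    - move=> t ht; rewrite /M6 /M5 !upd_neq ?p4 //; rewrite /aa /vaa /pa; lia.
    - apply: (rows_ext (M := M4) (M' := M6)); [lia | lia | exact: r4 | exact: hv | by move=> _; exact: ha | by move=> b h1 h2; rewrite /M6 /M5 !upd_neq].
  have c6 : ctx M6 by case: g6.
  apply: runs_store; rewrite ev_varA // addr_nat; split.
  - exact: good_var.
  - rewrite upd_neq; last by rewrite /va; lia.
    rewrite /M6 upd_neq; last by rewrite /aa /vaa /va; lia.
    rewrite /M5 upd_neq; last by rewrite /vaa /va; lia.
    exact: w0.
  - rewrite upd_eq eval_Add ev_ld //.
    rewrite /M6 upd_neq; last by rewrite /aa /vaa /va; lia.
    rewrite /M5 upd_neq; last by rewrite /vaa /va; lia.
    by rewrite w1 eval_cst -natrD addn1.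
have hK : (100 <= K)%N by rewrite /Kc; lia.
set KK := K; cbn [esize cst varA ld baseE nE mE PA VA AA OA]; rewrite /KK /Kc /=; lia.
Qed.

Lemma t_loop I M : (2 <= I <= n)%N -> t_inv I 0 M ->
  runs (c_t fe) M (t_inv I m.+1) (m.+1 * m.+1 * (10 * K) + K).
Proof.
move=> hIn h0.
apply: runs_weakenT.
  apply: (@runs_while _ _ (t_inv I) m.+1 (m.+1 * (4 * K) + 5 * K) _ _ _ h0).
    by move=> e M' he hM; apply: t_step.
  move=> M' [[c' _ _] _ w1]; rewrite eval_Le ev_ld // w1 ev_mE // ler_nat ltnn.
  by [].
have hK : (100 <= K)%N by rewrite /Kc; lia.
set KK := K; cbn [esize cst varA ld baseE nE mE PA VA AA OA]; nia.
Qed.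

Definition dp_inv d M := good M d.+2 0 /\ M (va 0) = d.+2%:R.

Lemma dp_step d M : (d < n.-1)%N -> dp_inv d M ->
  eval M (ELe (ld 0) nE) != 0 /\ runs (c_dpbody fe) M (dp_inv d.+1) (m.+1 * m.+1 * (10 * K) + 2 * K).
Proof.
move=> hd [g0 v0]; have c0 : ctx M by case: g0.
split; first by rewrite eval_Le ev_ld // v0 ev_nE // ler_nat (_ : (d.+2 <= n)%N) ?oner_eq0 //; lia.
apply: runs_weakenT.
  apply: runs_seq_store; rewrite ev_varA // addr_nat.
  set M1 := upd M _ _.
  have t0 : t_inv d.+2 0 M1.
    split; first exact: good_var.
    - by rewrite /M1 upd_neq ?v0 // /va; lia.
    - by rewrite /M1 upd_eq eval_cst.
  apply: (runs_seq (Q1 := t_inv d.+2 m.+1)); first by apply: t_loop t0; lia.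
  move=> M2 [[c2 p2 r2] w0 w1].
  apply: runs_store; rewrite ev_varA // addr_nat; split.
    apply: good_var => //; split => //; exact: rows_next.
  by rewrite upd_eq eval_Add ev_ld // w0 eval_cst -natrD addn1.
have hK : (100 <= K)%N by rewrite /Kc; lia.
set KK := K; cbn [esize cst varA ld baseE nE mE PA VA AA OA].
nia.
Qed.

Lemma dp_ok M : good M 1 m.+1 -> runs (c_dp fe) M (fun M' => good M' n.+1 0)
  (n * (m.+1 * m.+1 * (11 * K)) + 2 * K).
Proof.
move=> g0; have c0 : ctx M by case: g0.
apply: runs_weakenT.
  apply: runs_seq_store; rewrite ev_varA // addr_nat.
  set M1 := upd M _ _.
  have h0 : dp_inv 0 M1.
    split; last by rewrite /M1 upd_eq eval_cst.
    apply: good_var => //; case: g0 => c p r; split => //; exact: rows_next.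
  apply: runs_weaken.
  - apply: (@runs_while _ _ dp_inv n.-1 (m.+1 * m.+1 * (10 * K) + 2 * K) _ _ _ h0).
      by move=> d M' hd hM; apply: dp_step.
    move=> M' [[c' _ _] w0]; rewrite eval_Le ev_ld // w0 ev_nE // ler_nat.
    have -> : (n.-1.+2 <= n)%N = false by lia.
    by [].
  - by [].
  - by move=> M' [g' _]; move: g'; rewrite (prednK Hn).
have hK : (100 <= K)%N by rewrite /Kc; lia.
have hn1 : (n.-1 <= n)%N by lia.
set KK := K; cbn [esize cst varA ld baseE nE mE PA VA AA OA].
have := leq_mul hn1 (leqnn (m.+1 * m.+1 * (10 * KK) + 2 * KK + 22)).
nia.
Qed.

Lemma good_out M I T j v : (j < n)%N -> good M I T -> good (upd M (oa j) v) I T.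
Proof.
move=> hj [c p r]; split.
- by apply: upd_ctx => //; rewrite /oa; lia.
- by move=> t ht; rewrite upd_neq ?p //; rewrite /oa /pa /base; lia.
- move=> i' t' h1 h2 h3; have [r1 r2] := r i' t' h1 h2 h3.
  rewrite !upd_neq ?r1; first (split => // h; rewrite r2 //).
  + by rewrite /aa /vaa /oa /base; lia.
  + by rewrite /vaa /oa /base; lia.
Qed.

Local Notation R := (recf P f).

Definition rec_inv d M := [/\ good M n.+1 0, M (va 0) = (n - d)%:R &
  exists T sfx, [/\ M (va 1) = T%:R, (T <= m)%N, size sfx = d,
    R n m = R (n - d) T ++ sfx &
    forall j, (j < d)%N -> M (oa (n - d + j)) = (nth 0%N sfx j)%:R]].

Lemma A_le I T : (A I T <= T)%N.
Proof. by have [_ h _] := best_spec P f (V I.-1) T. Qed.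

Lemma R_step I T : (2 <= I)%N -> R I T = rcons (R I.-1 (A I T)) (T - A I T)%N.
Proof. by case: I => [|[|I]]. Qed.

Lemma rec_step d M : (d < n.-1)%N -> rec_inv d M ->
  eval M (ELt (cst 1) (ld 0)) != 0 /\ runs c_recbody M (rec_inv d.+1) 200.
Proof.
move=> hd [g0 v0 [T [sfx [v1 hT hs hR ho]]]].
have c0 : ctx M by case: g0.
set I := (n - d)%N.
have hI : (2 <= I <= n)%N by rewrite /I; lia.
split; first by rewrite eval_Lt eval_cst ev_ld // v0 ltr_nat (_ : (1 < n - d)%N) ?oner_eq0 //; lia.
have ei : eval M (ld 0) = I%:R by rewrite ev_ld.
have et : eval M (ld 1) = T%:R by rewrite ev_ld.
have eA : M (aa I T) = (A I T)%:R.
  case: g0 => _ _ r; have [_ r2] := r I T ltac:(lia) hT ltac:(lia).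
  by apply: r2; lia.
have eI1 := ev_Im1 c0 (ltnW (proj1 (andP hI))) v0.
apply: runs_weakenT.
  apply: runs_seq_store; rewrite (ev_OA c0 eI1) addr_nat.
  set M1 := upd M _ _.
  have g1 : good M1 n.+1 0 by apply: good_out => //; lia.
  have c1 : ctx M1 by case: g1.
  have ei1 : eval M1 (ld 0) = I%:R by rewrite ev_ld // /M1 upd_neq ?v0 // /oa /va /base; lia.
  have et1 : eval M1 (ld 1) = T%:R by rewrite ev_ld // /M1 upd_neq ?v1 // /oa /va /base; lia.
  have eA1 : M1 (aa I T) = (A I T)%:R by rewrite /M1 upd_neq // /oa /aa /vaa /base; lia.
  apply: runs_seq_store; rewrite ev_varA // addr_nat.
  set M2 := upd M1 _ _.
  have g2 : good M2 n.+1 0 by apply: good_var.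
  have c2 : ctx M2 by case: g2.
  apply: runs_store; rewrite ev_varA // addr_nat; split.
  - exact: good_var.
  - rewrite upd_eq eval_Sub ev_ld // /M2 upd_neq; last by rewrite /va; lia.
    rewrite /M1 upd_neq ?v0; last by rewrite /oa /va /base; lia.
    rewrite eval_cst (_ : (n - d = (n - d.+1).+1)%N) ?natr_sub1 //; lia.
  - exists (A I T), ((T - A I T)%N :: sfx); split.
    + rewrite upd_neq; last by rewrite /va; lia.
      by rewrite /M2 upd_eq eval_Load (ev_AA c1 ei1 et1) addr_nat eA1.
    + exact: leq_trans (A_le I T) hT.
    + by rewrite /= hs.
    + rewrite hR -/I (R_step _ (proj1 (andP hI))) cat_rcons.
      by congr (R _ _ ++ _); rewrite /I; lia.
    + move=> j hj.
      rewrite upd_neq; last by rewrite /oa /va /base; lia.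
      rewrite /M2 upd_neq; last by rewrite /oa /va /base; lia.
      case: j hj => [|j] hj.
        rewrite /M1 (_ : (n - d.+1 + 0 = I.-1)%N); last by rewrite /I; lia.
        rewrite upd_eq eval_Sub et eval_Load (ev_AA c0 ei et) addr_nat eA /=.
        by rewrite natrB // A_le.
      rewrite /M1 upd_neq; last by rewrite /oa /I; lia.
      rewrite (_ : (n - d.+1 + j.+1 = n - d + j)%N); last lia.
      by rewrite ho.
by cbn [esize cst varA ld baseE nE mE PA VA AA OA].
Qed.

Lemma rec_ok M : good M n.+1 0 ->
  runs c_rec M (fun M' => forall j, (j < n)%N -> M' (oa j) = (nth 0%N (R n m) j)%:R)
    (n * 300 + 100).
Proof.
move=> g0; have c0 : ctx M by case: g0.
apply: runs_weakenT.
  apply: runs_seq_store; rewrite ev_varA // addr_nat.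
  set M1 := upd M _ _.
  have g1 : good M1 n.+1 0 by apply: good_var.
  have c1 : ctx M1 by case: g1.
  apply: runs_seq_store; rewrite ev_varA // addr_nat.
  set M2 := upd M1 _ _.
  have g2 : good M2 n.+1 0 by apply: good_var.
  have c2 : ctx M2 by case: g2.
  have h0 : rec_inv 0 M2.
    split => //; first by rewrite /M2 upd_eq ev_nE // subn0.
    exists m, [::]; split => //.
    - by rewrite /M2 upd_neq ?/M1 ?upd_eq ?ev_mE // /va; lia.
    - by rewrite subn0 cats0.
  apply: (runs_seq (Q1 := rec_inv n.-1)).
    apply: (@runs_while _ _ rec_inv n.-1 200 _ _ _ h0).
      by move=> d M' hd hM; apply: rec_step.
    move=> M' [[c' _ _] w0 _]; rewrite eval_Lt eval_cst ev_ld // w0.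
    by rewrite (_ : (n - n.-1 = 1)%N) ?ltxx //; lia.
  move=> M3 [[c3 _ _] w0 [T [sfx [w1 hT hs hR ho]]]].
  apply: runs_store; rewrite (ev_OA c3 (eval_cst _ 0)) addr_nat.
  move=> j hj.
  rewrite (_ : (n - n.-1 = 1)%N) in hR ho; last lia.
  rewrite hR; have -> : R 1 T = [:: T] by [].
  rewrite cat1s; case: j hj => [|j] hj.
    by rewrite upd_eq ev_ld // w1.
  rewrite upd_neq; last by rewrite /oa; lia.
  by rewrite -ho //; lia.
by cbn [esize cst varA ld baseE nE mE PA VA AA OA]; nia.
Qed.

Lemma Sok_input : Sok (input_mem n m s).
Proof.
move=> j hj; rewrite /input_mem /= ifT; last lia.
by rewrite addKn.
Qed.

Lemma ctx_input : ctx (input_mem n m s).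
Proof. by split. Qed.

Lemma prog_ok : runs (prog fe) (input_mem n m s)
  (fun M' => forall j, (j < n)%N -> M' (oa j) = (nth 0%N (R n m) j)%:R)
  (1000 * K * (n * m ^ 2 + 1)).
Proof.
apply: runs_weakenT.
  apply: runs_if_true.
    by rewrite eval_Lt eval_cst ev_mE ?ctx_input // ltr_nat Hm oner_eq0.
  apply: (runs_seq (Q1 := pre_inv m)); first exact: pre_ok ctx_input Sok_input.
  move=> M1 [c1 _ _ p1].
  apply: (runs_seq (Q1 := row1_inv m.+1)); first exact: row1_ok.
  move=> M2 [g2 _].
  apply: (runs_seq (Q1 := fun M => good M n.+1 0)); first exact: dp_ok.
  move=> M3 g3; exact: rec_ok.
have hK : (100 <= K)%N by rewrite /Kc; lia.
set KK := K; cbn [esize cst varA ld baseE nE mE PA VA AA OA].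
have hm2 : (m.+1 * m.+1 <= 4 * m ^ 2)%N by nia.
have hm1 : (m <= m ^ 2)%N by nia.
have hn1 : (1 <= n)%N by [].
have h1 : (n * (m.+1 * m.+1 * (11 * KK)) <= 44 * KK * (n * m ^ 2))%N.
  have := leq_mul (leqnn n) (leq_mul hm2 (leqnn (11 * KK))); nia.
have h2 : (m <= n * m ^ 2)%N by nia.
have h3 : (n <= n * m ^ 2)%N by nia.
nia.
Qed.

End Main.

Set Implicit Arguments. Unset Strict Implicit. Unset Printing Implicit Defensive.
Import Order.TTheory GRing.Theory Num.Theory.
Local Open Scope ring_scope.

Lemma EU_list n m s (k : 'I_n -> nat) :
  [seq EU_FC m s k j | j <- enum 'I_n] = blocks (Pm m s) [seq k j | j <- enum 'I_n].
Proof.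
rewrite /blocks size_map size_enum_ord -val_enum_ord -map_comp.
by apply: eq_map => j /=; rewrite EU_FC_eq.
Qed.

Lemma generic (f : rat -> rat -> rat) (fe : expr -> expr -> expr) (agg : seq rat -> rat)
  (SW : forall n m : nat, seq rat -> ('I_n -> nat) -> rat) :
  (forall M a b, eval M (fe a b) = f (eval M a) (eval M b)) ->
  (forall x x' y, 0 <= y -> x <= x' -> f x y <= f x' y) ->
  (forall y, agg [:: y] = y) ->
  (forall L y, L != [::] -> agg (rcons L y) = f (agg L) y) ->
  (forall n m s k, SW n m s k = agg [seq EU_FC m s k j | j <- enum 'I_n]) ->
  computes_opt_in_O_nm2 SW (prog fe).
Proof.
move=> Hfe fmono agg1 aggr HSW.
exists (1000 * Kc fe)%N => n m s hn [hsz [hsort hall]].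
have hnn : forall j, 0 <= s`_j.
  move=> j; case: (ltnP j (size s)) => hj; last by rewrite nth_default.
  by move/allP: hall; apply; apply: mem_nth.
case: (posnP m) => hm.
  rewrite hm.
  exists (esize (ELt (cst 0) mE) + 1).+1, (input_mem n 0 s); split.
    apply: exec_if_false; last exact: exec_skip.
    by rewrite eval_Lt eval_cst (@eval_mE n 0 _ (conj erefl erefl)) ltxx.
  split; first by rewrite /Kc /=; lia.
  exists (fun _ => 0%N); split; [|split].
  - by move=> i; rewrite /input_mem.
  - by rewrite big1.
  - move=> k' hk'.
    have -> : k' = (fun _ => 0%N) => //.
    apply: functional_extensionality => i.
    apply/eqP; rewrite -leqn0 -hk' (bigD1 i) //=; exact: leq_addr.
have hP0 : Pm m s 0%N = 0 by rewrite /Pm take0 big_nil.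
have hPm : forall a b, (a <= b)%N -> Pm m s a <= Pm m s b.
  move=> a b hab; rewrite /Pm -(subnKC hab) takeD big_cat /= lerDl.
  by apply: sumr_ge0.
have [t [M' [ex [ht hout]]]] := prog_ok hm hn hsz Hfe.
exists t, M'; split => //; split => //.
set R := recf (Pm m s) f n m.
have [sR sumR aggR] := recf_spec hP0 agg1 aggr m hn.
rewrite -/R in sR sumR aggR.
have hmap : [seq nth 0%N R (val i) | i <- enum 'I_n] = R.
  by rewrite -[in RHS](mkseq_nth 0%N R) sR /mkseq -val_enum_ord -map_comp.
exists (fun i : 'I_n => nth 0%N R i); split; [|split].
- move=> i; rewrite (_ : (m.+2 + i)%N = oa m i); last by rewrite /oa; lia.
  by rewrite hout.
- by rewrite -sumR -[in RHS]hmap sumnE big_map big_enum.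
- move=> k' hk'.
  rewrite !HSW !EU_list hmap aggR.
  set c := [seq k' j | j <- enum 'I_n].
  have sc : size c = n by rewrite size_map size_enum_ord.
  have smc : sumn c = m by rewrite -hk' sumnE big_map big_enum.
  have hc : c != [::] by rewrite -size_eq0 sc -lt0n.
  by have := agg_blocks_ub hP0 hPm fmono agg1 aggr hc; rewrite sc smc.
Qed.

Definition fe_min (a b : expr) : expr := EAdd b (EMul (ELt a b) (ESub a b)).

Lemma foldr_min_rcons (x y : rat) xs :
  foldr Num.min x (rcons xs y) = Num.min (foldr Num.min x xs) y.
Proof.
elim: xs => [|z xs IH] /=; first exact: minC.
by rewrite IH minA.
Qed.

Theorem theorem1 :
  (exists P : cmd, computes_opt_in_O_nm2 (fun n m s k => @SWe_FC n m s k) P) /\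
  (exists P : cmd, computes_opt_in_O_nm2 (fun n m s k => @SWn_FC n m s k) P).
Proof.
split.
  exists (prog fe_min).
  apply: (@generic Num.min fe_min seqmin).
  - move=> M a b; rewrite /fe_min eval_Add eval_Mul eval_Lt eval_Sub minElt.
    by case: ifP => _; rewrite ?mul1r ?mul0r ?addr0 // addrC subrK.
  - move=> x x' y _ hx; rewrite !minElt.
    case: ifP => h1; case: ifP => h2 //.
    + exact: ltW.
    + by move/negbT: h1; rewrite -leNgt => h1; exact: le_trans h1 hx.
  - by [].
  - case=> [//|x xs] y _; exact: foldr_min_rcons.
  - by [].
exists (prog (fun a b => EMul a b)).
apply: (@generic *%R (fun a b => EMul a b) (fun L => \prod_(x <- L) x)).
- by [].
- by move=> x x' y hy hx; apply: ler_wpM2r.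
- by move=> y; rewrite big_seq1.
- by move=> L y _; rewrite -cats1 big_cat big_seq1.
- by move=> n m s k; rewrite /SWn_FC big_map big_enum.
Qed.
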